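(* For every closed subset $C\subseteq A$ and every $m\in\omega$, every $g\in\mathcal{G}_m$ that fixes $C\cap A_m$ pointwise extends to a permutation $\pi\in\mathcal{G}$ that fixes $C$ pointwise.
   Context: Let $\langle P,\preccurlyeq,\preccurlyeq^\ast\rangle$ be a doubly ordered set: $\preccurlyeq$ a partial order on $P$, $\preccurlyeq^\ast$ a preorder on $P$, and $p\preccurlyeq q\Rightarrow p\preccurlyeq^\ast q$. Write $p\prec q$ for ($p\preccurlyeq q$ and $p\neq q$). For a quadruple $\langle x_0,x_1,x_2,x_3\rangle$ and $i<4$, $\mathrm{pr}_i(\langle x_0,x_1,x_2,x_3\rangle)=x_i$. For a set $S$, $\mathscr{S}(S)$ is the set of permutations of $S$. Define recursively $A_0=\{\langle0,p,\varnothing,k\rangle\mid p\in P,k\in\omega\}$ and $A_{n+1}=A_n\cup\{\langle n+1,q,a,0\rangle\mid q\in P,a\in A_n,\mathrm{pr}_1(a)\prec q\}\cup\{\langle n+1,q,a,k\rangle\mid q\in P,a\in A_n,\mathrm{pr}_1(a)\not\preccurlyeq q,\mathrm{pr}_1(a)\preccurlyeq^\ast q,k\in\omega\}$; let $A=\bigcup_{n}A_n$. Define $\mathcal{G}_0=\{f\in\mathscr{S}(A_0)\mid \mathrm{pr}_1(f(a))=\mathrm{pr}_1(a)\text{ for all }a\in A_0\}$; for $f\in\mathscr{S}(A_{n+1})$, $f\in\mathcal{G}_{n+1}$ iff $f{\upharpoonright}A_n\in\mathcal{G}_n$ and for all $b\in A_{n+1}\setminus A_n$, $\mathrm{pr}_1(f(b))=\mathrm{pr}_1(b)$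 and $\mathrm{pr}_2(f(b))=f(\mathrm{pr}_2(b))$. Let $\mathcal{G}=\{\pi\in\mathscr{S}(A)\mid \pi{\upharpoonright}A_n\in\mathcal{G}_n\text{ for all }n\}$. A subset $C\subseteq A$ is closed if (i) for all $n\in\omega$, all $a\in C\cap A_n$ and all $q\in P$ with $\mathrm{pr}_1(a)\prec q$, we have $\langle n+1,q,a,0\rangle\in C$, and (ii) for all $b\in C\setminus A_0$, $\mathrm{pr}_2(b)\in C$. *)

(* Defs.v *)
(* Elements of A are quadruples <n, p, a, k>; the third component is either
   the empty set (None) or an element of A (Some a). *)
Inductive node (P : Type) : Type :=
  | Node : nat -> P -> option (node P) -> nat -> node P.
Arguments Node {P} _ _ _ _.

Definition pr0 {P} (x : node P) : nat := match x with Node n _ _ _ => n end.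
Definition pr1 {P} (x : node P) : P := match x with Node _ p _ _ => p end.
Definition pr2 {P} (x : node P) : option (node P) :=
  match x with Node _ _ a _ => a end.
Definition pr3 {P} (x : node P) : nat := match x with Node _ _ _ k => k end.

Definition strict {P} (le : P -> P -> Prop) (p q : P) : Prop := le p q /\ p <> q.

Fixpoint An {P} (le les : P -> P -> Prop) (n : nat) : node P -> Prop :=
  match n with
  | 0 => fun x => exists p k, x = Node 0 p None k
  | S n' => fun x =>
      An le les n' x
      \/ (exists q a, An le les n' a /\ strict le (pr1 a) q /\
                      x = Node (S n') q (Some a) 0)
      \/ (exists q a k, An le les n' a /\ ~ le (pr1 a) q /\ les (pr1 a) q /\
                        x = Node (S n') q (Some a) k)
  end.

Definition Aall {P} (le les : P -> P -> Prop) (x : node P) : Prop :=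
  exists n, An le les n x.

Definition perm_on {T} (S : T -> Prop) (f : T -> T) : Prop :=
  (forall x, S x -> S (f x)) /\
  (forall x y, S x -> S y -> f x = f y -> x = y) /\
  (forall y, S y -> exists x, S x /\ f x = y).

(* G_n f : the restriction of f to A_n belongs to the group G_n *)
Fixpoint Gn {P} (le les : P -> P -> Prop) (n : nat) (f : node P -> node P) : Prop :=
  match n with
  | 0 => perm_on (An le les 0) f /\
         (forall a, An le les 0 a -> pr1 (f a) = pr1 a)
  | S n' => perm_on (An le les (S n')) f /\ Gn le les n' f /\
         (forall b, An le les (S n') b -> ~ An le les n' b ->
            pr1 (f b) = pr1 b /\ pr2 (f b) = option_map f (pr2 b))
  end.

Definition Gall {P} (le les : P -> P -> Prop) (pi : node P -> node P) : Prop :=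
  perm_on (Aall le les) pi /\ forall n, Gn le les n pi.

Definition closed_set {P} (le les : P -> P -> Prop) (C : node P -> Prop) : Prop :=
  (forall n a q, C a -> An le les n a -> strict le (pr1 a) q ->
     C (Node (S n) q (Some a) 0)) /\
  (forall b, C b -> ~ An le les 0 b ->
     match pr2 b with Some a => C a | None => False end).

(* Main.v *)
Require Import Defs.
From Stdlib Require Import Lia Arith.

Lemma An_lvl {P} le les n (x : node P) : An le les n x -> pr0 x <= n.
Proof.
  revert x; induction n as [|n IH]; intros x H; simpl in H.
  - destruct H as (p & k & ->); simpl; lia.
  - destruct H as [H|[(q&a&Ha&_&->)|(q&a&k&Ha&_&_&->)]]; simpl; try lia.
    apply IH in H; lia.
Qed.

Lemma An_up {P} le les n (x : node P) : An le les n x -> forall k, n <= k -> An le les k x.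
Proof.
  intros H k Hk; induction Hk; [exact H| simpl; left; exact IHHk].
Qed.

Definition fcond {P} (le les : P -> P -> Prop) (a : node P) q k :=
  (strict le (pr1 a) q /\ k = 0) \/ (~ le (pr1 a) q /\ les (pr1 a) q).

Lemma An_S {P} le les n (x : node P) : An le les (S n) x ->
  An le les n x \/ exists q a k, x = Node (S n) q (Some a) k /\ An le les n a /\ fcond le les a q k.
Proof.
  simpl. intros [H|[(q&a&Ha&Hs&->)|(q&a&k&Ha&H1&H2&->)]].
  - left; exact H.
  - right; exists q, a, 0; split; [reflexivity|split; [exact Ha|left; split; auto]].
  - right; exists q, a, k; split; [reflexivity|split; [exact Ha|right; split; auto]].
Qed.

Lemma An_mk {P} le les n' q (a : node P) k : An le les n' a -> fcond le les a q k ->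
  An le les (S n') (Node (S n') q (Some a) k).
Proof.
  intros Ha [[Hs ->]|[H1 H2]]; simpl; right.
  - left; exists q, a; auto.
  - right; exists q, a, k; auto.
Qed.

Lemma An_inv {P} le les n (x : node P) : An le les n x ->
  (exists p k, x = Node 0 p None k) \/
  (exists n' q a k, x = Node (S n') q (Some a) k /\ An le les n' a /\ S n' <= n /\
     fcond le les a q k).
Proof.
  revert x; induction n as [|n IH]; intros x H.
  - left; exact H.
  - destruct (An_S _ _ _ _ H) as [H'|(q&a&k&E&Ha&Hc)].
    + destruct (IH x H') as [H2|(n'&q&a&k&E&Ha&Hl&Hc)]; [left; exact H2|].
      right; exists n', q, a, k; repeat split; auto; lia.
    + right; exists n, q, a, k; auto.
Qed.

Lemma An_self {P} le les n (x : node P) : An le les n x -> An le les (pr0 x) x.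
Proof.
  intros H; destruct (An_inv _ _ _ _ H) as [(p&k&->)|(n'&q&a&k&->&Ha&_&Hc)].
  - simpl; exists p, k; reflexivity.
  - simpl; apply An_mk; auto.
Qed.

Lemma Gn_le {P} le les n k (f : node P -> node P) : n <= k -> Gn le les k f -> Gn le les n f.
Proof.
  intros Hk; induction Hk; auto.
  intros H; apply IHHk; destruct H as (_&H&_); exact H.
Qed.

Lemma Gn_perm {P} le les n (f : node P -> node P) : Gn le les n f -> perm_on (An le les n) f.
Proof. destruct n; simpl; tauto. Qed.

Lemma perm_on_ext {T} (S : T -> Prop) f h : (forall x, S x -> f x = h x) -> perm_on S f -> perm_on S h.
Proof.
  intros E (H1&H2&H3); split; [|split].
  - intros x Hx; rewrite <- E; auto.
  - intros x y Hx Hy Hxy; apply H2; auto; rewrite !E; auto.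
  - intros y Hy; destruct (H3 y Hy) as (x&Hx&<-); exists x; split; auto; symmetry; auto.
Qed.

Lemma Gn_ext {P} le les n (f h : node P -> node P) :
  (forall x, An le les n x -> f x = h x) -> Gn le les n f -> Gn le les n h.
Proof.
  revert f h; induction n as [|n IH]; intros f h E G.
  - destruct G as (G1&G2); split; [eapply perm_on_ext; eauto|].
    intros a Ha; rewrite <- E; auto.
  - destruct G as (G1&G2&G3); split; [eapply perm_on_ext; eauto|split].
    + apply (IH f h); auto. intros x Hx; apply E; simpl; left; auto.
    + intros b Hb Hn. rewrite <- E by auto. destruct (G3 b Hb Hn) as (F1&F2).
      split; auto. rewrite F2.
      destruct (An_inv _ _ _ _ Hb) as [(p&k&->)|(n'&q&a&k&->&Ha&Hl&_)]; simpl; auto.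
      f_equal; apply E. simpl; left; apply (An_up _ _ _ _ Ha); lia.
Qed.

Lemma Gn_pr1 {P} le les n (f : node P -> node P) a :
  Gn le les n f -> An le les n a -> pr1 (f a) = pr1 a.
Proof.
  revert a; induction n as [|n IH]; intros a G Ha.
  - destruct G as (_&G); auto.
  - destruct G as (G1&G2&G3).
    destruct (An_S _ _ _ _ Ha) as [H|(q&b&k&E&Hb&Hc)]; [apply IH; auto|].
    apply G3; auto. intros Hn; apply An_lvl in Hn; subst; simpl in Hn; lia.
Qed.

Lemma Gn_step {P} le les n (f : node P -> node P) :
  Gn le les n f ->
  (forall q a k, An le les n a -> f (Node (S n) q (Some a) k) = Node (S n) q (Some (f a)) k) ->
  Gn le les (S n) f.
Proof.
  intros G Hs. pose proof (Gn_perm _ _ _ _ G) as (P1&P2&P3).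
  assert (Hc : forall a q k, An le les n a -> fcond le les a q k -> fcond le les (f a) q k).
  { intros a q k Ha Hc. unfold fcond in *; rewrite (Gn_pr1 _ _ _ _ _ G Ha); exact Hc. }
  split; [split; [|split]|split; [exact G|]].
  - intros x Hx. destruct (An_S _ _ _ _ Hx) as [H|(q&a&k&->&Ha&Hcd)].
    + simpl; left; auto.
    + rewrite Hs by auto. apply An_mk; auto.
  - intros x y Hx Hy Hxy.
    destruct (An_S _ _ _ _ Hx) as [H|(q&a&k&->&Ha&Hcd)];
    destruct (An_S _ _ _ _ Hy) as [H'|(q'&a'&k'&->&Ha'&Hcd')].
    + auto.
    + rewrite Hs in Hxy by auto. apply P1, An_lvl in H. rewrite Hxy in H; simpl in H; lia.
    + rewrite Hs in Hxy by auto. apply P1, An_lvl in H'. rewrite <- Hxy in H'; simpl in H'; lia.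
    + rewrite !Hs in Hxy by auto. injection Hxy as E1 E2 E3. subst.
      rewrite (P2 a a'); auto.
  - intros y Hy. destruct (An_S _ _ _ _ Hy) as [H|(q&a&k&->&Ha&Hcd)].
    + destruct (P3 y H) as (x&Hx&E); exists x; split; auto; simpl; left; auto.
    + destruct (P3 a Ha) as (x&Hx&<-). exists (Node (S n) q (Some x) k); split.
      * apply An_mk; auto. unfold fcond in *; rewrite <- (Gn_pr1 _ _ _ _ _ G Hx); auto.
      * apply Hs; auto.
  - intros b Hb Hn. destruct (An_S _ _ _ _ Hb) as [H|(q&a&k&->&Ha&Hcd)]; [tauto|].
    rewrite Hs by auto; simpl; auto.
Qed.

Fixpoint piF {P} (m : nat) (g : node P -> node P) (x : node P) : node P :=
  match x with
  | Node n p o k => if n <=? m then g x else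
      Node n p (match o with Some a => Some (piF m g a) | None => None end) k
  end.

Lemma piF_eq {P} m g n p (o : option (node P)) k :
  piF m g (Node n p o k) = if n <=? m then g (Node n p o k) else Node n p (option_map (piF m g) o) k.
Proof. destruct o; reflexivity. Qed.

Theorem lemma2p3 (P : Type) (le les : P -> P -> Prop)
  (le_refl : forall p, le p p)
  (le_antisym : forall p q, le p q -> le q p -> p = q)
  (le_trans : forall p q r, le p q -> le q r -> le p r)
  (les_refl : forall p, les p p)
  (les_trans : forall p q r, les p q -> les q r -> les p r)
  (le_les : forall p q, le p q -> les p q)
  (C : node P -> Prop)
  (HCA : forall x, C x -> Aall le les x)
  (HC : closed_set le les C)
  (m : nat) (g : node P -> node P)
  (Hg : Gn le les m g)
  (Hfix : forall x, C x -> An le les m x -> g x = x) :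
  exists pi : node P -> node P,
    Gall le les pi /\
    (forall x, An le les m x -> pi x = g x) /\
    (forall x, C x -> pi x = x).
Proof.
  set (pi := piF m g).
  assert (H1 : forall x, pr0 x <= m -> pi x = g x).
  { intros [n p o k] Hx; simpl in Hx; unfold pi; rewrite piF_eq.
    apply Nat.leb_le in Hx; rewrite Hx; reflexivity. }
  assert (H2 : forall n q a k, m < S n -> pi (Node (S n) q (Some a) k) = Node (S n) q (Some (pi a)) k).
  { intros n q a k Hl; unfold pi; rewrite piF_eq.
    destruct (Nat.leb_spec (S n) m); [lia|reflexivity]. }
  assert (Hlow : forall n, n <= m -> Gn le les n pi).
  { intros n Hn. apply (Gn_ext _ _ _ g); [|apply (Gn_le _ _ _ m); auto].
    intros x Hx; symmetry; apply H1; apply An_lvl in Hx; lia. }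
  assert (Hall : forall n, Gn le les n pi).
  { induction n as [|n IH]; [apply Hlow; lia|].
    destruct (le_lt_dec (S n) m) as [l|l]; [apply Hlow; auto|].
    apply Gn_step; auto. }
  exists pi; split; [split; [split; [|split]|exact Hall]|split].
  - intros x (n&Hx). exists n. apply (Gn_perm _ _ _ _ (Hall n)); auto.
  - intros x y (n1&Hx) (n2&Hy) E.
    apply (Gn_perm _ _ _ _ (Hall (n1 + n2))); auto;
      [apply (An_up _ _ _ _ Hx)|apply (An_up _ _ _ _ Hy)]; lia.
  - intros y (n&Hy). destruct (Gn_perm _ _ _ _ (Hall n)) as (_&_&P3).
    destruct (P3 y Hy) as (x&Hx&E); exists x; split; auto; exists n; auto.
  - intros x Hx; apply H1; apply An_lvl in Hx; auto.
  - assert (K : forall d x, pr0 x <= d -> C x -> pi x = x).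
    { induction d as [|d IH]; intros x Hd Cx;
      destruct (HCA x Cx) as (n&Hn);
      destruct (An_inv _ _ _ _ Hn) as [(p&k&->)|(n'&q&a&k&->&Ha&Hl&Hcd)].
      - rewrite H1 by (simpl; lia). apply Hfix; auto. apply (An_up _ _ 0); [exists p, k; auto|lia].
      - simpl in Hd; lia.
      - rewrite H1 by (simpl; lia). apply Hfix; auto. apply (An_up _ _ 0); [exists p, k; auto|lia].
      - destruct (le_lt_dec (S n') m) as [l|l].
        + rewrite H1 by (simpl; lia). apply Hfix; auto.
          apply (An_up _ _ (S n')); [apply An_mk; auto|lia].
        + rewrite H2 by auto.
          destruct HC as (_&HC2).
          assert (Ca : C a).
          { specialize (HC2 _ Cx). simpl in HC2. apply HC2.
            intros (?&?&H0); discriminate H0. }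
          rewrite (IH a); auto. apply An_lvl in Ha. simpl in Hd; lia. }
    intros x Cx; apply (K (pr0 x)); auto.
Qed.
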